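(* Let $(R,d)$ be a fusion algebra whose set $I$ of irreducible objects is infinite, and let $X\subseteq I$ be a finite generating set. Then the limits $\lim_{n\to\infty}\sqrt[n]{|B_X(n)|}$ and $\lim_{n\to\infty}\sqrt[n]{|S_X(n)|}$ exist and belong to $[1,\infty)$.
   Context: A fusion algebra $(R,d)$ consists of a set $I$ with distinguished $e$ and involution $\alpha\mapsto\bar\alpha$, a unital ring structure on $R=\mathbb{Z}[I]$ with unit $e$ and $\xi\eta=\sum_\alpha N^\alpha_{\xi,\eta}\alpha$, $N^\alpha_{\xi,\eta}\in\mathbb{Z}_{\ge0}$ finitely many nonzero, the involution extending to a $\mathbb{Z}$-linear antimultiplicative involution, Frobenius reciprocity $N^\alpha_{\xi,\eta}=N^\xi_{\alpha,\bar\eta}=N^\eta_{\bar\xi,\alpha}$, and $\mathbb{Z}$-linear multiplicative $d:R\to\mathbb{R}$ with $d(\bar\alpha)=d(\alpha)\ge1$ on $I$. Write $\alpha\subseteq r$ if $\alpha$ has nonzero coefficient in $r$. $|A|=\sum_{\alpha\in A}d(\alpha)^2$. A finite generating set is a finite $X\subseteq I$ with $\bar X=X$ such that every $\alpha\in I$ satisfies $\alpha\subseteq x_1\cdots x_n$ for some $x_i\in X$. $\ell_X(e)=0$, otherwise $\ell_X(\alpha)=\min\{n\ge1:\exists x_1,\dots,x_n\in X,\ \alpha\subseteq x_1\cdots x_n\}$; $B_X(n)=\{\alpha:\ell_X(\alpha)\le n\}$, $S_X(n)=\{\alpha:\ell_X(\alpha)=n\}$. *)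

(* Defs.v *)
From HB Require Import structures.
From mathcomp Require Import all_boot all_order all_algebra.
From mathcomp Require Import all_classical all_reals all_analysis.
Set Implicit Arguments. Unset Strict Implicit. Unset Printing Implicit Defensive.
Import Order.TTheory GRing.Theory Num.Theory.

(* A fusion algebra on the basis I (a choiceType, so that it has decidable
   equality).  fa_N a x y is the structure constant N^a_{x,y}, i.e.
   x * y = \sum_a N^a_{x,y} a.  fa_supp x y is a finite list containing
   every a with N^a_{x,y} <> 0 (finiteness of the support). *)
Record fusion_algebra (I : choiceType) := FusionAlgebra {
  fa_e : I;
  fa_bar : I -> I;
  fa_N : I -> I -> I -> nat;
  fa_supp : I -> I -> seq I;
  fa_suppP : forall a x y, fa_N a x y != 0%N -> a \in fa_supp x y;
  fa_unitl : forall a y, fa_N a fa_e y = nat_of_bool (a == y);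
  fa_unitr : forall a x, fa_N a x fa_e = nat_of_bool (a == x);
  (* associativity: coefficient of a in (x y) z and in x (y z) *)
  fa_assoc : forall x y z a,
    (\sum_(b <- undup (fa_supp x y)) fa_N b x y * fa_N a b z =
     \sum_(b <- undup (fa_supp y z)) fa_N b y z * fa_N a x b)%N;
  (* the involution, extended Z-linearly, is an antimultiplicative involution *)
  fa_barK : involutive fa_bar;
  fa_bar_anti : forall a x y, fa_N (fa_bar a) (fa_bar y) (fa_bar x) = fa_N a x y;
  fa_frob1 : forall a x y, fa_N a x y = fa_N x a (fa_bar y);
  fa_frob2 : forall a x y, fa_N a x y = fa_N y (fa_bar x) a
}.

Local Open Scope ring_scope.

(* d : R -> reals, given on the basis I and extended Z-linearly; it is a
   (unital) ring morphism, with d(bar a) = d(a) >= 1 on I. *)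
Definition is_dimension (R : realType) (I : choiceType) (F : fusion_algebra I)
    (d : I -> R) : Prop :=
  [/\ d (fa_e F) = 1,
      forall a, d (fa_bar F a) = d a,
      forall a, 1 <= d a
    & forall x y, d x * d y =
        \sum_(a <- undup (fa_supp F x y)) (fa_N F a x y)%:R * d a].

Section Words.
Variables (I : choiceType) (F : fusion_algebra I).

Fixpoint wsupp (w : seq I) : seq I :=
  match w with
  | [::] => [:: fa_e F]
  | x :: w' => flatten [seq fa_supp F x b | b <- undup (wsupp w')]
  end.

Fixpoint wcoef (w : seq I) (a : I) : nat :=
  match w with
  | [::] => nat_of_bool (a == fa_e F)
  | x :: w' => (\sum_(b <- undup (wsupp w')) wcoef w' b * fa_N F a x b)%N
  end.

Definition subprod (a : I) (w : seq I) : Prop := wcoef w a <> 0%N.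

Definition generating_set (X : seq I) : Prop :=
  (forall x, x \in X -> fa_bar F x \in X) /\
  (forall a : I, exists w : seq I, all (fun x => x \in X) w /\ subprod a w).

Fixpoint words (X : seq I) (k : nat) : seq (seq I) :=
  match k with
  | 0 => [:: [::]]
  | k'.+1 => [seq x :: w | x <- X, w <- words X k']
  end.

(* B_X(n) = {a | l_X(a) <= n} = {e} U {a | a \subseteq x_1..x_k, 1<=k<=n, x_i in X},
   as a duplicate-free list *)
Definition ballX (X : seq I) (n : nat) : seq I :=
  undup (fa_e F :: flatten [seq [seq a <- wsupp w | wcoef w a != 0%N]
                           | w <- flatten [seq words X k | k <- iota 1 n]]).

(* S_X(n) = {a | l_X(a) = n} : {e} for n = 0, B_X(n) \ B_X(n-1) for n >= 1 *)
Definition sphereX (X : seq I) (n : nat) : seq I :=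
  if n is n'.+1 then [seq a <- ballX X n | a \notin ballX X n'] else [:: fa_e F].

(* |A| = \sum_{a in A} d(a)^2 *)
Definition wsize (R : realType) (d : I -> R) (A : seq I) : R :=
  \sum_(a <- A) d a ^+ 2.

End Words.

Definition infinite_type (I : choiceType) : Prop :=
  ~ exists s : seq I, forall a : I, a \in s.

(* Main.v *)
Require Import Defs.
From HB Require Import structures.
From mathcomp Require Import all_boot all_order all_algebra.
From mathcomp Require Import all_classical all_reals all_analysis.
From mathcomp Require Import lra.
Import Order.TTheory GRing.Theory Num.Theory numFieldNormedType.Exports.
Local Open Scope classical_set_scope.
Local Open Scope ring_scope.
Section Fekete.
Variables (R : realType) (f : nat -> R).
Hypothesis f1 : forall n, 1 <= f n.
Hypothesis fm : forall n m, f (n + m)%N <= f n * f m.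

Let a n := ln (f n).
Let fpos n : f n \is Num.pos.
Proof. by rewrite posrE (lt_le_trans ltr01 (f1 n)). Qed.
Let a_ge0 n : 0 <= a n.
Proof. exact: ln_ge0. Qed.
Let a_sub n m : a (n + m)%N <= a n + a m.
Proof.
rewrite /a -lnM ?fpos //; rewrite ler_ln ?fpos //.
by rewrite posrE mulr_gt0 // -posrE fpos.
Qed.
Let a_mul q k r : a (q * k + r)%N <= q%:R * a k + a r.
Proof.
elim: q => [|q IH]; first by rewrite mul0n add0n mul0r add0r.
rewrite mulSn -addnA (le_trans (a_sub _ _)) // mulrS mulrDl mul1r -addrA lerD2l //.
Qed.

Let b n := n%:R^-1 * a n.
Let E := [set b n | n in [set n : nat | (0 < n)%N]].

Let E_ne : E !=set0.
Proof. by exists (b 1%N); exists 1%N. Qed.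
Let E_lb : lbound E 0.
Proof. by move=> x [n _ <-]; rewrite /b mulr_ge0 // invr_ge0. Qed.
Let E_inf : has_inf E.
Proof. by split => //; exists 0. Qed.

Let L := inf E.
Let L_ge0 : 0 <= L.
Proof. exact: lb_le_inf. Qed.

Let b_cvg : b @ \oo --> L.
Proof.
apply/cvgrPdist_le => eps eps0.
have eps20 : 0 < eps / 2 by rewrite divr_gt0.
have [e [k k0 <-] bk] := inf_adherent eps20 E_inf.
rewrite /= in k0.
pose M := \sum_(r < k) a r.
have M0 : 0 <= M by rewrite sumr_ge0.
have aM r : (r < k)%N -> a r <= M.
  move=> rk; rewrite /M (bigD1 (Ordinal rk)) //= lerDl sumr_ge0 //.
pose N := (Num.Def.archi_bound (M * 2 / eps)).+1.
exists N => // n /= Nn.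
have n0 : (0 < n)%N by apply: leq_trans Nn.
have Lb : L <= b n by apply: ge_inf => //; [exists 0 | exists n].
rewrite distrC ger0_norm ?subr_ge0 //.
have hq : (n %/ k * k <= n)%N by rewrite leq_trunc_div.
have han : a n <= (n %/ k)%:R * a k + M.
  rewrite {1}(divn_eq n k) (le_trans (a_mul _ _ _)) // lerD2l aM // ltn_pmod //.
have hN : M * 2 / eps < n%:R.
  apply: (lt_le_trans (archi_boundP _)); first by rewrite divr_ge0 ?mulr_ge0 // ltW.
  by rewrite ler_nat ltnW.
have nR : 0 < n%:R :> R by rewrite ltr0n.
have kR : 0 < k%:R :> R by rewrite ltr0n.
have qkn : (n %/ k)%:R * k%:R <= n%:R :> R by rewrite -natrM ler_nat.
rewrite /b.
have h1 : n%:R^-1 * a n <= n%:R^-1 * ((n %/ k)%:R * a k) + n%:R^-1 * M.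
  by rewrite -mulrDr ler_wpM2l // invr_ge0 ltW.
have h2 : n%:R^-1 * ((n %/ k)%:R * a k) <= k%:R^-1 * a k.
  rewrite mulrA ler_wpM2r // mulrC ler_pdivrMr // mulrC ler_pdivlMr //.
have h3 : n%:R^-1 * M <= eps / 2.
  rewrite mulrC ler_pdivrMr //.
  move: hN; rewrite ltr_pdivrMr // => hN.
  nra.
move: bk Lb; rewrite /b -/L => bk Lb.
lra.
Qed.

Lemma fekete_mult : exists l : R, 1 <= l /\
  (fun n : nat => f n `^ (n%:R^-1)) @ \oo --> l.
Proof.
exists (expR L); split.
  by rewrite (le_trans _ (expR_ge1Dx L)) // lerDl.
have -> : (fun n : nat => f n `^ (n%:R^-1)) = expR \o b.
  apply: funext => n /=; rewrite /powR ifF ?/b //.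
  by apply/negbTE; rewrite gt_eqF // (lt_le_trans ltr01 (f1 n)).
apply: continuous_cvg => //; exact: continuous_expR.
Qed.
End Fekete.
Section Comb.
Variables (I : choiceType) (F : fusion_algebra I).
Local Notation N := (fa_N F).
Local Notation e := (fa_e F).

Lemma sumn_neq0 (s : seq I) (g : I -> nat) :
  (\sum_(b <- s) g b != 0)%N <-> exists2 b, b \in s & g b != 0%N.
Proof.
elim: s => [|x s IH]; first by rewrite big_nil; split => // [[]].
rewrite big_cons addn_eq0 negb_and; split.
  case/orP => [h|/IH [b bs gb]]; first by exists x; rewrite ?mem_head.
  by exists b; rewrite // in_cons bs orbT.
move=> [b]; rewrite in_cons => /orP [/eqP -> ->//|bs gb].
by apply/orP; right; apply/IH; exists b.
Qed.

Lemma wcoef_cons1 x w a : wcoef F (x :: w) a != 0%N ->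
  exists b, wcoef F w b != 0%N /\ N a x b != 0%N.
Proof.
move=> /= /sumn_neq0 [b _]; rewrite muln_eq0 negb_or => /andP [h1 h2].
by exists b.
Qed.

Lemma wsupp_coef w a : wcoef F w a != 0%N -> a \in wsupp F w.
Proof.
elim: w a => [|x w IH] a /=.
  by case: (a =P e) => [-> _|]//; rewrite mem_head.
move=> /sumn_neq0 [b bs]; rewrite muln_eq0 negb_or => /andP [h1 h2].
apply/flatten_mapP; exists b => //; exact: fa_suppP.
Qed.

Lemma wcoef_cons x w a : wcoef F (x :: w) a != 0%N <->
  exists b, wcoef F w b != 0%N /\ N a x b != 0%N.
Proof.
split; first exact: wcoef_cons1.
move=> [b [h1 h2]] /=; apply/sumn_neq0; exists b.
  by rewrite mem_undup; apply: wsupp_coef.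
by rewrite muln_eq0 negb_or h1 h2.
Qed.

Fixpoint subl (u : seq I) (c a : I) : Prop :=
  match u with
  | [::] => a = c
  | x :: u' => exists b, subl u' c b /\ N a x b != 0%N
  end.

Lemma wcoef_cat u v a : wcoef F (u ++ v) a != 0%N <->
  exists c, wcoef F v c != 0%N /\ subl u c a.
Proof.
elim: u a => [|x u IH] a /=.
  by split => [h|[c [h ->]]] //; exists a.
rewrite -/(wcoef F (x :: (u ++ v)) a) wcoef_cons; split.
  move=> [b [/IH [c [hc hb]] hn]]; exists c; split => //; by exists b.
move=> [c [hc [b [hb hn]]]]; exists b; split => //; apply/IH; by exists c.
Qed.

Lemma assoc_neq0 x b'' c a :
  (exists b, N b x b'' != 0%N /\ N a b c != 0%N) <->
  (exists b', N b' b'' c != 0%N /\ N a x b' != 0%N).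
Proof.
have := fa_assoc F x b'' c a => hA.
split.
- move=> [b [h1 h2]].
  have : (\sum_(b <- undup (fa_supp F x b'')) N b x b'' * N a b c != 0)%N.
    apply/sumn_neq0; exists b; first by rewrite mem_undup fa_suppP.
    by rewrite muln_eq0 negb_or h1 h2.
  rewrite hA => /sumn_neq0 [b' _]; rewrite muln_eq0 negb_or => /andP [h3 h4].
  by exists b'.
- move=> [b [h1 h2]].
  have : (\sum_(b <- undup (fa_supp F b'' c)) N b b'' c * N a x b != 0)%N.
    apply/sumn_neq0; exists b; first by rewrite mem_undup fa_suppP.
    by rewrite muln_eq0 negb_or h1 h2.
  rewrite -hA => /sumn_neq0 [b' _]; rewrite muln_eq0 negb_or => /andP [h3 h4].
  by exists b'.
Qed.

Lemma subl_coef u c a : subl u c a <->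
  exists b, wcoef F u b != 0%N /\ N a b c != 0%N.
Proof.
elim: u a => [|x u IH] a /=.
  split => [->|[b [hb hn]]].
    by exists e; rewrite eqxx fa_unitl eqxx.
  by move: hb hn; case: (b =P e) => [-> _|]//; rewrite fa_unitl; case: (a =P c).
split.
- move=> [b' [/IH [b'' [h1 h2]] h3]].
  have [b [h4 h5]] : exists b, N b x b'' != 0%N /\ N a b c != 0%N.
    by apply/assoc_neq0; exists b'.
  exists b; split => //.
  by rewrite -/(wcoef F (x :: u) b); apply/wcoef_cons; exists b''.
- move=> [b []]; rewrite -/(wcoef F (x :: u) b) => /wcoef_cons [b'' [h1 h2]] h3.
  have [b' [h4 h5]] : exists b', N b' b'' c != 0%N /\ N a x b' != 0%N.
    by apply/assoc_neq0; exists b.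
  exists b'; split => //; apply/IH; by exists b''.
Qed.

Lemma wcoef_cat2 u v a : wcoef F (u ++ v) a != 0%N <->
  exists b c, [/\ wcoef F u b != 0%N, wcoef F v c != 0%N & N a b c != 0%N].
Proof.
rewrite wcoef_cat; split.
  by move=> [c [hc /subl_coef [b [hb hn]]]]; exists b, c.
move=> [b [c [hb hc hn]]]; exists c; split => //; apply/subl_coef; by exists b.
Qed.

Variable X : seq I.

Definition inB n a := exists w, [/\ (size w <= n)%N, all (fun x => x \in X) w &
   wcoef F w a != 0%N].
Definition inS n a := inB n a /\ forall k, (k < n)%N -> ~ inB k a.

Lemma mem_words k w : (w \in words X k) = (size w == k) && all (fun x => x \in X) w.
Proof.
elim: k w => [|k IH] w /=; first by case: w.
apply/allpairsP/idP.
  by move=> [[x w'] /= [hx]]; rewrite IH => /andP [/eqP <- hw] ->; rewrite /= eqxx hx.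
case: w => // x w /= /andP [hs /andP [hx hw]].
by rewrite eqSS in hs; exists (x, w); rewrite /= IH hs hw hx.
Qed.

Lemma mem_ballX n a : a \in ballX F X n <-> inB n a.
Proof.
rewrite /ballX mem_undup in_cons; split.
  case/orP => [/eqP ->|].
    by exists [::]; rewrite /= eqxx.
  move=> /flatten_mapP [w /flatten_mapP [k]].
  rewrite mem_iota mem_words => /andP [k1 kn] /andP [/eqP sw hw].
  rewrite mem_filter => /andP [ha _].
  exists w; split => //; rewrite sw -ltnS; by rewrite add1n in kn.
move=> [w [sw hw ha]].
case: w sw hw ha => [|x w] sw hw ha.
  by move: ha => /=; case: (a =P e) => [->|]//; rewrite eqxx.
apply/orP; right; apply/flatten_mapP; exists (x :: w).
  apply/flatten_mapP; exists (size (x :: w)).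
    by rewrite mem_iota /= add1n ltnS sw.
  by rewrite mem_words eqxx.
by rewrite mem_filter ha wsupp_coef.
Qed.

Lemma inB_mono k n a : (k <= n)%N -> inB k a -> inB n a.
Proof. move=> kn [w [sw hw ha]]; exists w; split => //; exact: leq_trans kn. Qed.

Lemma inB0 a : inB 0 a <-> a = e.
Proof.
split.
  by move=> [[|x w] [sw _ ha]] //; move: ha => /=; case: (a =P e).
by move=> ->; exists [::]; rewrite /= eqxx.
Qed.

Lemma mem_sphereX n a : a \in sphereX F X n <-> inS n a.
Proof.
case: n => [|n] /=.
  rewrite in_cons in_nil orbF; split.
    by move=> /eqP ->; split => //; apply/inB0.
  by move=> [/inB0 -> _]; rewrite eqxx.
rewrite mem_filter; split.
  move=> /andP [hn /mem_ballX hb]; split => // k kn hk; move/negP: hn; apply.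
  by apply/mem_ballX; apply: inB_mono hk.
move=> [hb hk]; apply/andP; split; last exact/mem_ballX.
by apply/negP => /mem_ballX; exact: hk.
Qed.

Lemma mul_inB p q a b c : inB p b -> inB q c -> N a b c != 0%N -> inB (p + q) a.
Proof.
move=> [u [su hu hb]] [v [sv hv hc]] hn.
exists (u ++ v); split.
- by rewrite size_cat leq_add.
- by rewrite all_cat hu hv.
- by apply/wcoef_cat2; exists b, c.
Qed.

Lemma split_inB n m a : inB (n + m) a ->
  exists b c, [/\ inB n b, inB m c & N a b c != 0%N].
Proof.
move=> [w [sw hw ha]].
move: ha hw; rewrite -(cat_take_drop n w) => /wcoef_cat2 [b [c [hb hc hn]]].
rewrite all_cat => /andP [h1 h2].
exists b, c; split => //.
- exists (take n w); split => //; by rewrite size_take; case: ltnP.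
- exists (drop n w); split => //; by rewrite size_drop leq_subLR.
Qed.

Lemma split_inS n m a : inS (n + m) a ->
  exists b c, [/\ inS n b, inS m c & N a b c != 0%N].
Proof.
move=> [ha hk].
have [b [c [hb hc hn]]] := @split_inB n m a ha.
exists b, c; split => //.
- split => // k kn hbk; apply: (hk (k + m)%N); first by rewrite ltn_add2r.
  exact: mul_inB hbk hc hn.
- split => // k kn hck; apply: (hk (n + k)%N); first by rewrite ltn_add2l.
  exact: mul_inB hb hck hn.
Qed.

Lemma descent m a : inS m.+1 a -> exists b, inS m b.
Proof.
move=> [[w [sw hw ha]] hk].
case: w sw hw ha => [|x w] sw hw ha.
  by exfalso; apply: (hk 0%N) => //; exists [::].
move: ha => /wcoef_cons [b [hb hn]].
move: hw => /= /andP [hx hw].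
exists b; split.
  by exists w; split.
move=> k km [u [su hu hbu]]; apply: (hk k.+1); first by [].
exists (x :: u); split => //=; first by rewrite hx.
by apply/wcoef_cons; exists b.
Qed.

Lemma exS n : infinite_type I -> generating_set F X -> exists b, inS n b.
Proof.
move=> hinf [_ hgen].
have [a ha] : exists a, a \notin ballX F X n.
  apply: boolp.contrapT => hne; apply: hinf; exists (ballX F X n) => a.
  by apply: boolp.contrapT => h; apply: hne; exists a; apply/negP.
have [w [hw hwa]] := hgen a.
have hB : inB (size w) a by exists w; split => //; apply/eqP.
have hnB : ~ inB n a by move=> /mem_ballX h; rewrite h in ha.
suff : forall k a, inB k a -> ~ inB n a -> exists b, inS n b by apply; eauto.
elim => [|k IH] a' h1 h2.
  by exfalso; apply: h2; apply: inB_mono h1.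
have [h3|h3] := boolp.pselect (inB k a'); first exact: IH h3 h2.
have hS : inS k.+1 a'.
  split => // j jk hj; apply: h3; exact: inB_mono hj.
have [b hb] := @descent k a' hS.
have nk : (n <= k)%N.
  by rewrite leqNgt; apply/negP => kn; apply: h2; apply: inB_mono h1.
case: (ltngtP n k) nk => // [nk|->] _; last by exists b.
apply: (IH b) => //; first by case: hb.
move=> hbn; case: hb => _ /(_ n nk); exact.
Qed.

End Comb.
Section Real.
Variables (R : realType) (I : choiceType) (F : fusion_algebra I) (d : I -> R).
Hypothesis hd : is_dimension F d.
Local Notation N := (fa_N F).

Let d_ge1 a : 1 <= d a. Proof. by case: hd. Qed.
Let d_ge0 a : 0 <= d a. Proof. exact: le_trans ler01 (d_ge1 a). Qed.
Let d_mul b c : d b * d c = \sum_(a <- undup (fa_supp F b c)) (N a b c)%:R * d a.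
Proof. by case: hd. Qed.

Lemma term_le_sum (g : I -> R) (s : seq I) x : (forall y, 0 <= g y) ->
  x \in s -> g x <= \sum_(y <- s) g y.
Proof.
move=> g0; elim: s => // y s IH; rewrite in_cons big_cons => /orP [/eqP ->|xs].
  by rewrite lerDl sumr_ge0.
by rewrite (le_trans (IH xs)) // lerDr.
Qed.

Lemma sub_uniq_sum (g : I -> R) (s1 s2 : seq I) : (forall y, 0 <= g y) ->
  uniq s1 -> uniq s2 -> {subset s1 <= s2} ->
  \sum_(y <- s1) g y <= \sum_(y <- s2) g y.
Proof.
move=> g0 u1 u2 sub.
rewrite -(perm_big _ (permEl (perm_filterC (fun y => y \in s1) s2))) big_cat /=.
have -> : \sum_(y <- [seq y <- s2 | y \in s1]) g y = \sum_(y <- s1) g y.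
  apply: perm_big; apply: uniq_perm; rewrite ?filter_uniq //.
  by move=> y; rewrite mem_filter; case: (boolP (y \in s1)) => // /sub ->.
by rewrite lerDl sumr_ge0.
Qed.

Lemma prod_bound b c :
  \sum_(a <- undup (fa_supp F b c) | N a b c != 0%N) d a ^+ 2 <= (d b * d c) ^+ 2.
Proof.
set U := undup (fa_supp F b c).
have g0 : forall y, 0 <= (N y b c)%:R * d y by move=> y; rewrite mulr_ge0.
have hle a : N a b c != 0%N -> d a <= (N a b c)%:R * d a.
  by move=> hn; rewrite ler_peMl // ler1n lt0n.
have hda a : N a b c != 0%N -> d a <= d b * d c.
  move=> hn; rewrite d_mul (le_trans (hle a hn)) //.
  by apply: (term_le_sum (fun y => (N y b c)%:R * d y)) => //; rewrite mem_undup fa_suppP.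
have h1 : \sum_(a <- U | N a b c != 0%N) d a <= d b * d c.
  rewrite d_mul big_mkcond /=; apply: ler_sum => a _.
  by case: ifP => hn; [apply: hle | rewrite mulr_ge0].
apply: (le_trans (y := \sum_(a <- U | N a b c != 0%N) d a * (d b * d c))).
  by apply: ler_sum => a hn; rewrite expr2 ler_wpM2l // hda.
by rewrite -big_distrl /= [X in _ <= X]expr2 ler_wpM2r ?mulr_ge0.
Qed.

Lemma cover (A s t : seq I) : uniq A ->
  (forall a, a \in A -> exists b c, [/\ b \in s, c \in t & N a b c != 0%N]) ->
  \sum_(a <- A) d a ^+ 2 <= \sum_(b <- s) \sum_(c <- t) (d b * d c) ^+ 2.
Proof.
move=> uA hA.
pose G b c a := if N a b c != 0%N then d a ^+ 2 else 0.
have G0 b c a : 0 <= G b c a by rewrite /G; case: ifP => // _; rewrite sqr_ge0.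
apply: (le_trans (y := \sum_(a <- A) \sum_(b <- s) \sum_(c <- t) G b c a)).
  rewrite big_seq_cond [X in _ <= X]big_seq_cond; apply: ler_sum => a /andP [ha _].
  have [b [c [hb hc hn]]] := hA a ha.
  have H1 : forall y, 0 <= \sum_(c <- t) G y c a by move=> y; rewrite sumr_ge0.
  apply: (le_trans _ (term_le_sum (fun b => \sum_(c <- t) G b c a) s b H1 hb)).
  apply: (le_trans _ (term_le_sum (fun c => G b c a) t c (fun y => G0 b y a) hc)).
  by rewrite /G hn.
rewrite exchange_big /=; apply: ler_sum => b _.
rewrite exchange_big /=; apply: ler_sum => c _.
apply: le_trans (prod_bound b c).
rewrite -big_mkcond -big_filter -[X in _ <= X]big_filter.
apply: sub_uniq_sum; rewrite ?filter_uniq ?undup_uniq //.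
  by move=> y; rewrite sqr_ge0.
by move=> y; rewrite !mem_filter => /andP [hn _]; rewrite hn mem_undup fa_suppP.
Qed.

Lemma sum_sq_split (s t : seq I) :
  \sum_(b <- s) \sum_(c <- t) (d b * d c) ^+ 2 =
  (\sum_(b <- s) d b ^+ 2) * (\sum_(c <- t) d c ^+ 2).
Proof.
rewrite big_distrl /=; apply: eq_bigr => b _; rewrite big_distrr /=.
by apply: eq_bigr => c _; rewrite exprMn.
Qed.

End Real.
Theorem lemma3p8 (R : realType) (I : choiceType) (F : fusion_algebra I)
    (d : I -> R) (X : seq I) :
  is_dimension F d -> infinite_type I -> generating_set F X ->
  (exists l : R, 1 <= l /\
     (fun n : nat => wsize d (ballX F X n) `^ (n%:R^-1)) @ \oo --> l) /\
  (exists l : R, 1 <= l /\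
     (fun n : nat => wsize d (sphereX F X n) `^ (n%:R^-1)) @ \oo --> l).
Proof.
move=> hd hinf hgen.
have d1 a : 1 <= d a by case: hd.
have wge1 : forall s x, x \in s -> 1 <= wsize d s.
  move=> s x hx; rewrite /wsize.
  apply: (le_trans _ (@term_le_sum R I (fun a => d a ^+ 2) s x (fun y => sqr_ge0 (d y)) hx)).
  by rewrite /= exprn_ege1.
have uB n : uniq (ballX F X n) by rewrite /ballX undup_uniq.
have uS n : uniq (sphereX F X n).
  by case: n => [|n] //=; rewrite filter_uniq.
split; apply: fekete_mult.
- move=> n; apply: (wge1 _ (fa_e F)); apply/mem_ballX.
  by apply: (@inB_mono I F X 0 n) => //; apply/inB0.
- move=> n m; rewrite /wsize -sum_sq_split; apply: (@cover R I F d hd) => //.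
  move=> a /mem_ballX /split_inB [b [c [hb hc hn]]].
  by exists b, c; split => //; apply/mem_ballX.
- move=> n; have [b hb] := @exS I F X n hinf hgen.
  by apply: (wge1 _ b); apply/mem_sphereX.
- move=> n m; rewrite /wsize -sum_sq_split; apply: (@cover R I F d hd) => //.
  move=> a /mem_sphereX /split_inS [b [c [hb hc hn]]].
  by exists b, c; split => //; apply/mem_sphereX.
Qed.
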